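(* In the setup below, every element $R(i;j,k\,|\,l;m,n)$ (with $i\neq l$) and every element $T(i,j\,|\,k,l\,|\,m,n)$ (with $i,k,m$ pairwise distinct) lies in $K_2^T(C)$.
   Context: Let $K$ be a field, $N\ge2$, $N_1,\dots,N_N\ge1$. For $1\le i\le N$, $1\le j\le N_i$ let $L_{i,j}=a_ix+b_iy+c_{i,j}$ with $a_i,b_i,c_{i,j}\in K$, $(a_i,b_i)\ne(0,0)$, such that the affine lines $L_{i,j}=0$ are pairwise distinct and $[i,k]:=a_ib_k-a_kb_i\neq0$ for $i\neq k$. For $\lambda\in K^*$ put $f(x,y)=\lambda\prod_{i,j}L_{i,j}-1$; the affine curve $f=0$ is irreducible. Let $C'\subset\mathbb P^2_K$ be its projective closure, $C$ the normalisation of $C'$ (a regular proper irreducible curve), and $F$ its function field; the $L_{i,j}$ are regarded as elements of $F^*$. $K_2(F)$ is the abelian group generated by symbols $\{a,b\}$, $a,b\in F^*$, with relations $\{a_1a_2,b\}=\{a_1,b\}+\{a_2,b\}$, $\{a,b_1b_2\}=\{a,b_1\}+\{a,b_2\}$, $\{a,1-a\}=0$ for $a\neq0,1$. For a closed point $x$ of $C$ with residue field $k(x)$, the tame symbol is $T_x(\{a,b\})=(-1)^{\mathrm{ord}_x(a)\mathrm{ord}_x(b)}\bigl(a^{\mathrm{ord}_x(b)}/b^{\mathrm{ord}_x(a)}\bigr)(x)\in k(x)^*$, and $K_2^T(C)$ is the kernel of $\bigoplus_x T_x:K_2(F)\to\bigoplus_x k(x)^*$. Define $R(i;j,k\,|\,l;m,n)=\{L_{i,j}/L_{i,k},\,L_{l,m}/L_{l,n}\}$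 for $i\ne l$, and $T(i,j\,|\,k,l\,|\,m,n)=\Bigl\{\frac{[i,m]}{[k,m]}\frac{L_{k,l}}{L_{i,j}},\,\frac{[i,k]}{[m,k]}\frac{L_{m,n}}{L_{i,j}}\Bigr\}$ for $i,k,m$ pairwise distinct (second indices in the appropriate ranges). *)

(* Defs.v *)
From HB Require Import structures.
From mathcomp Require Import all_boot all_order all_algebra.
Set Implicit Arguments. Unset Strict Implicit. Unset Printing Implicit Defensive.
Import Order.TTheory GRing.Theory Num.Theory.
Local Open Scope ring_scope.

(* Polynomials in two variables over K: {poly {poly K}}; the inner variable is
   X = ('X : {poly K})%:P, the outer variable is Y = 'X. *)
Definition polyX2 (K : fieldType) : {poly {poly K}} := ('X : {poly K})%:P.
Definition polyY2 (K : fieldType) : {poly {poly K}} := 'X.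
Definition polyC2 (K : fieldType) (c : K) : {poly {poly K}} := c%:P%:P.

Definition ev2 (K : fieldType) (F : fieldType) (iota : {rmorphism K -> F})
  (x y : F) (p : {poly {poly K}}) : F :=
  (map_poly (fun q : {poly K} => (map_poly iota q).[x]) p).[y].

Definition Lpoly (K : fieldType) (a b c : K) : {poly {poly K}} :=
  polyC2 a * polyX2 K + polyC2 b * polyY2 K + polyC2 c.

Definition fpoly (K : fieldType) (N : nat) (Ns : 'I_N -> nat)
  (a b : 'I_N -> K) (c : forall i : 'I_N, 'I_(Ns i) -> K) (lam : K)
  : {poly {poly K}} :=
  polyC2 lam * (\prod_(i < N) \prod_(j < Ns i) Lpoly (a i) (b i) (c i j)) - 1.

(* F (with K -> F and elements x, y) is the function field of the affine curve
   f = 0, i.e. F = Frac(K[X,Y]/(f)) with x, y the classes of X, Y: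
   the kernel of K[X,Y] -> F, p |-> p(x,y) is exactly (f), and F is generated
   as a field by the image. *)
Definition is_function_field (K F : fieldType) (iota : {rmorphism K -> F})
  (x y : F) (f : {poly {poly K}}) : Prop :=
  (forall p : {poly {poly K}}, ev2 iota x y p = 0 <-> exists g, p = f * g) /\
  (forall z : F, exists p q : {poly {poly K}},
      ev2 iota x y q != 0 /\ z = ev2 iota x y p / ev2 iota x y q).

(* Normalised discrete valuation of F, trivial on K (= closed point of the
   regular proper model C of F). The value at 0 is irrelevant. *)
Definition is_Kdval (K F : fieldType) (iota : {rmorphism K -> F})
  (v : F -> int) : Prop :=
  [/\ (forall u w : F, u != 0 -> w != 0 -> v (u * w) = v u + v w),
      (forall u w : F, u != 0 -> w != 0 -> u + w != 0 ->
         Num.min (v u) (v w) <= v (u + w)),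
      (forall c : K, c != 0 -> v (iota c) = 0)
    & exists t : F, t != 0 /\ v t = 1].

Definition inO (F : fieldType) (v : F -> int) (u : F) : Prop := u = 0 \/ 0 <= v u.

(* res : O_v -> k is a ring morphism with kernel the maximal ideal, i.e. it
   induces an embedding of the residue field k(v) = O_v / m_v into k. *)
Definition is_residue (F k : fieldType) (v : F -> int) (res : F -> k) : Prop :=
  [/\ (forall u w, inO v u -> inO v w -> res (u + w) = res u + res w),
      (forall u w, inO v u -> inO v w -> res (u * w) = res u * res w),
      res 1 = 1
    & (forall u, inO v u -> (res u = 0 <-> (u = 0 \/ 0 < v u)))].

Definition tame_trivial (F k : fieldType) (v : F -> int) (res : F -> k)
  (u w : F) : Prop :=
  res ((-1) ^ (v u * v w) * (u ^ (v w) / w ^ (v u))) = 1.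

Definition in_K2T (K F : fieldType) (iota : {rmorphism K -> F}) (u w : F) : Prop :=
  forall v : F -> int, is_Kdval iota v ->
  forall (k : fieldType) (res : F -> k), is_residue v res ->
  tame_trivial v res u w.

Definition brk (K : fieldType) (N : nat) (a b : 'I_N -> K) (i k : 'I_N) : K :=
  a i * b k - a k * b i.

Definition Lel (K F : fieldType) (iota : {rmorphism K -> F}) (x y : F)
  (ai bi cij : K) : F := iota ai * x + iota bi * y + iota cij.

(* Main.v *)
Require Import Defs.
From HB Require Import structures.
From mathcomp Require Import all_boot all_order all_algebra.
From mathcomp Require Import zify ring lra.
Import Order.TTheory GRing.Theory Num.Theory.
Local Open Scope ring_scope.
Set Implicit Arguments. Unset Strict Implicit.

Definition vge (F : fieldType) (v : F -> int) (r : int) (s : F) : Prop :=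
  s = 0 \/ r <= v s.

Section V.
Lemma vM (K F : fieldType) (iota : {rmorphism K -> F}) (v : F -> int)
  (hv : is_Kdval iota v) u w : u != 0 -> w != 0 -> v (u * w) = v u + v w.
Proof. by case: hv => h _ _ _; apply: h. Qed.

Lemma vC (K F : fieldType) (iota : {rmorphism K -> F}) (v : F -> int)
  (hv : is_Kdval iota v) c : c != 0 -> v (iota c) = 0.
Proof. by case: hv => _ _ h _; apply: h. Qed.

Lemma v1 (K F : fieldType) (iota : {rmorphism K -> F}) (v : F -> int)
  (hv : is_Kdval iota v) : v 1 = 0.
Proof. by rewrite -(rmorph1 iota) (vC hv) // oner_neq0. Qed.

Lemma vV (K F : fieldType) (iota : {rmorphism K -> F}) (v : F -> int)
  (hv : is_Kdval iota v) u : u != 0 -> v (u^-1) = - v u.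
Proof.
move=> u0; have := vM hv u0 (invr_neq0 u0); rewrite mulfV // (v1 hv).
move=> h; apply/eqP; rewrite -(inj_eq (addrI (v u))) -h subrr //.
Qed.

Lemma vD (K F : fieldType) (iota : {rmorphism K -> F}) (v : F -> int)
  (hv : is_Kdval iota v) u w : u != 0 -> w != 0 -> v (u / w) = v u - v w.
Proof. by move=> u0 w0; rewrite (vM hv) ?invr_neq0 // (vV hv). Qed.

Lemma vN (K F : fieldType) (iota : {rmorphism K -> F}) (v : F -> int)
  (hv : is_Kdval iota v) u : u != 0 -> v (- u) = v u.
Proof.
move=> u0; rewrite -mulN1r -(rmorphN1 iota) (vM hv) ?(vC hv) ?add0r //.
  by rewrite oppr_eq0 oner_neq0.
by rewrite rmorphN1 oppr_eq0 oner_neq0.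
Qed.

Lemma vge_add (K F : fieldType) (iota : {rmorphism K -> F}) (v : F -> int)
  (hv : is_Kdval iota v) r s1 s2 : vge v r s1 -> vge v r s2 -> vge v r (s1 + s2).
Proof.
case=> [->|h1]; first by rewrite add0r.
case=> [->|h2]; first by rewrite addr0; right.
have [->|s10] := eqVneq s1 0; first by rewrite add0r; right.
have [->|s20] := eqVneq s2 0; first by rewrite addr0; right.
have [->|s0] := eqVneq (s1 + s2) 0; first by left.
right; case: hv => _ hu _ _; apply: le_trans (hu _ _ s10 s20 s0).
by rewrite le_min h1 h2.
Qed.

Lemma vge_C (K F : fieldType) (iota : {rmorphism K -> F}) (v : F -> int)
  (hv : is_Kdval iota v) c : vge v 0 (iota c).
Proof.
have [->|c0] := eqVneq c 0; first by left; rewrite rmorph0.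
by right; rewrite (vC hv).
Qed.

Lemma vge_mulC (K F : fieldType) (iota : {rmorphism K -> F}) (v : F -> int)
  (hv : is_Kdval iota v) r c s : vge v r s -> vge v r (iota c * s).
Proof.
have [->|c0] := eqVneq c 0; first by left; rewrite rmorph0 mul0r.
case=> [->|h]; first by left; rewrite mulr0.
have [->|s0] := eqVneq s 0; first by left; rewrite mulr0.
by right; rewrite (vM hv) ?fmorph_eq0 // (vC hv) // add0r.
Qed.

Lemma vge_opp (K F : fieldType) (iota : {rmorphism K -> F}) (v : F -> int)
  (hv : is_Kdval iota v) r s : vge v r s -> vge v r (- s).
Proof. by move=> h; rewrite -mulN1r -(rmorphN1 iota); apply: vge_mulC. Qed.

Lemma vge_le (F : fieldType) (v : F -> int) r r' s : r' <= r -> vge v r s -> vge v r' s.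
Proof. by move=> h [->|h']; [left|right; apply: le_trans h']. Qed.

Lemma vge_v (F : fieldType) (v : F -> int) s : vge v (v s) s.
Proof. by right. Qed.

Lemma vge_div (K F : fieldType) (iota : {rmorphism K -> F}) (v : F -> int)
  (hv : is_Kdval iota v) r s z : z != 0 -> vge v r s -> vge v (r - v z) (s / z).
Proof.
move=> z0 [->|h]; first by left; rewrite mul0r.
have [->|s0] := eqVneq s 0; first by left; rewrite mul0r.
by right; rewrite (vD hv) // lerB.
Qed.

Lemma vstrict (K F : fieldType) (iota : {rmorphism K -> F}) (v : F -> int)
  (hv : is_Kdval iota v) a r s : a != 0 -> vge v r s -> v a < r ->
  a + s != 0 /\ v (a + s) = v a.
Proof.
move=> a0 [->|h] lt; first by rewrite addr0.
have [->|s0] := eqVneq s 0; first by rewrite addr0.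
have vas : v a < v s by apply: lt_le_trans h.
have as0 : a + s != 0.
  apply/eqP => e; move: vas; have -> : s = - a by rewrite -(addKr a s) e addr0.
  by rewrite (vN hv) // ltxx.
split=> //; case: hv => hm hu hc ht.
have h1 := hu _ _ a0 s0 as0.
have h2 : Num.min (v (a + s)) (v (- s)) <= v a.
  have e : a = (a + s) + - s by rewrite addrK.
  rewrite [X in _ <= v X]e; apply: hu => //; first by rewrite oppr_eq0.
  by rewrite -e.
rewrite (vN (And4 hm hu hc ht)) // in h2.
move: h1 h2 vas; move: (v a) (v s) (v (a + s)) => p q w; lia.
Qed.
End V.

Lemma cases4 (p q r : int) : ~ [/\ p < q, p < r & p < 0] -> ~ [/\ q < p, q < r & q < 0] ->
  ~ [/\ r < p, r < q & r < 0] -> Num.min p q < 0 ->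
  [\/ p = q /\ q = r, q = r /\ r < p /\ r < 0, p = r /\ p < q /\ p < 0 | p = q /\ p < r /\ p < 0].
Proof.
  move=> n1 n2 n3 h.
  case/orP: (orbN (p < q)) => pq; case/orP: (orbN (q < p)) => qp; case/orP: (orbN (q < r)) => qr; case/orP: (orbN (r < q)) => rq; case/orP: (orbN (p < r)) => pr; case/orP: (orbN (r < p)) => rp.
  all: first [by exfalso; apply n1; split; clear n1 n2 n3; lia
   | by exfalso; apply n2; split; clear n1 n2 n3; lia
   | by exfalso; apply n3; split; clear n1 n2 n3; lia
   | by constructor 1; clear n1 n2 n3; lia | by constructor 2; clear n1 n2 n3; lia
   | by constructor 3; clear n1 n2 n3; lia | by constructor 4; clear n1 n2 n3; lia
   | by exfalso; clear n1 n2 n3; lia | idtac].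
Qed.

Section R.
Variables (K F k : fieldType) (iota : {rmorphism K -> F}) (v : F -> int).
Hypothesis hv : is_Kdval iota v.
Variable res : F -> k.
Hypothesis hres : is_residue v res.

Lemma res0 : res 0 = 0.
Proof. by case: hres => _ _ _ h; apply/(h 0); left. Qed.

Lemma resD u w : vge v 0 u -> vge v 0 w -> res (u + w) = res u + res w.
Proof. by case: hres => h _ _ _; apply: h. Qed.

Lemma resM u w : vge v 0 u -> vge v 0 w -> res (u * w) = res u * res w.
Proof. by case: hres => _ h _ _; apply: h. Qed.

Lemma res1 : res 1 = 1.
Proof. by case: hres. Qed.

Lemma vNone : v (-1) = 0.
Proof. by rewrite (vN hv) ?oner_neq0 // (v1 hv). Qed.

Lemma resN1 : res (-1) = -1.
Proof.
have h : res (1 + -1) = res 1 + res (-1).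
  by apply: resD; right; rewrite ?(v1 hv) ?vNone.
rewrite subrr res0 res1 in h.
by apply/eqP; rewrite -addr_eq0 eq_sym addrC h.
Qed.

Lemma res_pos t : vge v 1 t -> res t = 0.
Proof.
move=> h; case: hres => _ _ _ hk; apply/hk; first exact: vge_le h.
by case: h => [->|h]; [left|right; apply: lt_le_trans h].
Qed.

Lemma unit_plus e t : (e = 1 \/ e = -1) -> vge v 1 t ->
  [/\ e + t != 0, v (e + t) = 0 & res (e + t) = res e].
Proof.
move=> he ht.
have e0 : e != 0 by case: he => ->; rewrite ?oppr_eq0 oner_neq0.
have ve : v e = 0 by case: he => ->; rewrite ?(v1 hv) ?vNone.
have lt1 : v e < 1 by rewrite ve.
have [h1 h2] := vstrict hv e0 ht lt1.
rewrite h2 ve resD ?(res_pos ht) ?addr0 //; first by right; rewrite ve.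
exact: vge_le ht.
Qed.

Lemma res_inv z : z != 0 -> v z = 0 -> res (z^-1) = (res z)^-1.
Proof.
move=> z0 vz.
have h : res z * res z^-1 = 1.
  by rewrite -resM ?mulfV ?res1 //; right; rewrite ?(vV hv) // vz.
have rz0 : res z != 0 by apply/eqP => e; move: h; rewrite e mul0r => /eqP; rewrite eq_sym oner_eq0.
by rewrite -[LHS]mul1r -(mulVf rz0) -mulrA h mulr1.
Qed.

Lemma res_expn z : z != 0 -> v z = 0 -> forall m : nat,
  [/\ z ^+ m != 0, v (z ^+ m) = 0 & res (z ^+ m) = res z ^+ m].
Proof.
move=> z0 vz; elim=> [|m [h1 h2 h3]]; first by rewrite !expr0 oner_neq0 (v1 hv) res1.
rewrite !exprS mulf_neq0 // (vM hv) // vz h2 add0r resM ?h3 //; right; rewrite ?vz ?h2 //.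
Qed.

Lemma res_expz z : z != 0 -> v z = 0 -> forall n : int,
  [/\ z ^ n != 0, v (z ^ n) = 0 & res (z ^ n) = res z ^ n].
Proof.
move=> z0 vz [m|m]; first exact: res_expn.
have [h1 h2 h3] := res_expn z0 vz m.+1.
rewrite /exprz invr_neq0 // (vV hv) // h2 oppr0 res_inv // h3 //.
Qed.

Lemma S0 u w : v u = 0 -> v w = 0 -> tame_trivial v res u w.
Proof. by move=> hu hw; rewrite /tame_trivial hu hw mulr0 !expr0z mul1r divr1 res1. Qed.

Lemma S1 u w : u != 0 -> v u = 0 -> res u = 1 -> tame_trivial v res u w.
Proof.
move=> u0 vu ru; rewrite /tame_trivial vu mul0r !expr0z mul1r divr1.
by have [_ _ ->] := res_expz u0 vu (v w); rewrite ru exp1rz.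
Qed.

Lemma S2 u w : w != 0 -> v w = 0 -> res w = 1 -> tame_trivial v res u w.
Proof.
move=> w0 vw rw; rewrite /tame_trivial vw mulr0 !expr0z mul1r div1r.
have [h1 h2 h3] := res_expz w0 vw (v u).
by rewrite res_inv // h3 rw exp1rz invr1.
Qed.

Lemma S3 u w t : u != 0 -> w != 0 -> v u = v w -> u / w = -1 + t -> vge v 1 t ->
  tame_trivial v res u w.
Proof.
move=> u0 w0 e uw ht; rewrite /tame_trivial e.
have [q0 vq rq] := unit_plus (or_intror erefl) ht.
rewrite -uw in q0 vq rq.
rewrite invr_expz -exprz_inv -expfzMl.
have m10 : (-1 : F) != 0 by rewrite oppr_eq0 oner_neq0.
have [a1 a2 a3] := res_expz m10 vNone (v w * v w).
have [b1 b2 b3] := res_expz q0 vq (v w).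
rewrite resM; last by right; rewrite b2.
  2: by right; rewrite a2.
rewrite a3 b3 rq resN1.
rewrite -exprz_exp.
have : (-1 : k) ^ v w = 1 \/ (-1 : k) ^ v w = -1.
  case: (v w) => n; rewrite /exprz -signr_odd; case: (odd _);
  rewrite ?expr1 ?expr0 ?invrN ?invr1; by [left|right].
by case=> h; rewrite h ?exp1rz ?mulr1 // h mulN1r opprK.
Qed.

Lemma Rcase X Y (c : K) : Y != 0 -> v Y < 0 -> X - Y = iota c ->
  [/\ X / Y != 0, v (X / Y) = 0 & res (X / Y) = 1].
Proof.
move=> Y0 vY e.
have eX : X / Y = 1 + iota c / Y.
  by rewrite -e mulrBl mulfV // addrC subrK.
have ht : vge v 1 (iota c / Y).
  apply: vge_le (vge_div hv Y0 (vge_C hv c)); rewrite sub0r; move: vY; lia.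
have [h1 h2 h3] := unit_plus (or_introl erefl) ht.
by rewrite eX h1 h2 h3 res1.
Qed.

Lemma nouniq P Q R (c0 : K) : P + Q + R = iota c0 -> P != 0 -> Q != 0 -> R != 0 ->
  v P < v Q -> v P < v R -> v P < 0 -> False.
Proof.
move=> e P0 Q0 R0 h1 h2 h3.
have hQR : vge v (Num.min (v Q) (v R)) (Q + R).
  by apply: (vge_add hv); apply: vge_le (vge_v _ _); rewrite ?ge_min lexx ?orbT.
have lt : v P < Num.min (v Q) (v R) by move: h1 h2; move: (v P) (v Q) (v R) => p q r; lia.
have [n0 vPQR] := vstrict hv P0 hQR lt.
rewrite addrA e in n0 vPQR.
have c00 : c0 != 0 by apply: contraNneq n0 => ->; rewrite rmorph0.
by move: h3; rewrite -vPQR (vC hv) // ltxx.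
Qed.

Lemma vmulC (c : K) z : c != 0 -> z != 0 -> v (iota c * z) = v z.
Proof. by move=> c0 z0; rewrite (vM hv) ?fmorph_eq0 // (vC hv) // add0r. Qed.

End R.


Lemma min_ge0 (p q : int) : 0 <= Num.min p q -> 0 <= p /\ 0 <= q.
Proof. lia. Qed.
Lemma lt0_add1 (p : int) : p < 0 -> p + 1 <= 0.
Proof. lia. Qed.
Lemma lt_add1 (p q : int) : p < q -> p + 1 <= q.
Proof. lia. Qed.
Lemma add1_sub (p : int) : 1 <= p + 1 - p.
Proof. lia. Qed.

Section R2.
Variables (K F k : fieldType) (iota : {rmorphism K -> F}) (v : F -> int).
Hypothesis hv : is_Kdval iota v.
Variable res : F -> k.
Hypothesis hres : is_residue v res.
Lemma Tcase X Y Z (c0 c1 A B : K) :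
  X != 0 -> Y != 0 -> Z != 0 -> c1 != 0 -> A != 0 -> B != 0 ->
  iota c1 * X + iota (- (A * c1)) * Y + iota (- (B * c1)) * Z = iota c0 ->
  (vge v 0 X -> vge v 0 Y -> v X = 0 /\ v Y = 0 /\ v Z = 0) ->
  tame_trivial v res (iota A * Y / X) (iota B * Z / X).
Proof.
move=> X0 Y0 Z0 c10 A0 B0 e hz.
have c20 : - (A * c1) != 0 by rewrite oppr_eq0 mulf_neq0.
have c30 : - (B * c1) != 0 by rewrite oppr_eq0 mulf_neq0.
have u0 : iota A * Y / X != 0 by rewrite !mulf_neq0 ?fmorph_eq0 ?invr_neq0.
have w0 : iota B * Z / X != 0 by rewrite !mulf_neq0 ?fmorph_eq0 ?invr_neq0.
have vu : v (iota A * Y / X) = v Y - v X by rewrite (vD hv) ?mulf_neq0 ?fmorph_eq0 // (vmulC hv).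
have vw : v (iota B * Z / X) = v Z - v X by rewrite (vD hv) ?mulf_neq0 ?fmorph_eq0 // (vmulC hv).
have iA : iota A != 0 by rewrite fmorph_eq0.
have iB : iota B != 0 by rewrite fmorph_eq0.
have ic1 : iota c1 != 0 by rewrite fmorph_eq0.
have [hmin|hmin] := lerP 0 (Num.min (v X) (v Y)).
  have [hx hy] : vge v 0 X /\ vge v 0 Y.
    by have [a1 a2] := min_ge0 hmin; split; right.
  have [h1 [h2 h3]] := hz hx hy.
  by apply: (S0 hres); rewrite ?vu ?vw h1 ?h2 ?h3 subr0.
have vc1X : v (iota c1 * X) = v X by rewrite (vmulC hv).
have vc2Y : v (iota (- (A * c1)) * Y) = v Y by rewrite (vmulC hv).
have vc3Z : v (iota (- (B * c1)) * Z) = v Z by rewrite (vmulC hv).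
have m1 : iota c1 * X != 0 by rewrite mulf_neq0 ?fmorph_eq0.
have m2 : iota (- (A * c1)) * Y != 0 by rewrite mulf_neq0 ?fmorph_eq0.
have m3 : iota (- (B * c1)) * Z != 0 by rewrite mulf_neq0 ?fmorph_eq0.
have nX : ~ [/\ v X < v Y, v X < v Z & v X < 0].
  case=> a1 a2 a3; apply: (nouniq hv e m1 m2 m3); by rewrite ?vc1X ?vc2Y ?vc3Z.
have nY : ~ [/\ v Y < v X, v Y < v Z & v Y < 0].
  case=> a1 a2 a3; apply: (nouniq hv (P := iota (- (A * c1)) * Y) (Q := iota c1 * X) (R := iota (- (B * c1)) * Z) (c0 := c0)) => //;
  by [rewrite (addrC (_ * Y)) | rewrite ?vc1X ?vc2Y ?vc3Z].
have nZ : ~ [/\ v Z < v X, v Z < v Y & v Z < 0].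
  case=> a1 a2 a3; apply: (nouniq hv (P := iota (- (B * c1)) * Z) (Q := iota c1 * X) (R := iota (- (A * c1)) * Y) (c0 := c0)) => //;
  by [rewrite -e; ring | rewrite ?vc1X ?vc2Y ?vc3Z].
have eY : Y = (iota c0 - iota c1 * X - iota (- (B * c1)) * Z) / iota (- (A * c1)).
  by rewrite -e; field; rewrite oppr_eq0 mulf_neq0.
have eZ : Z = (iota c0 - iota c1 * X - iota (- (A * c1)) * Y) / iota (- (B * c1)).
  by rewrite -e; field; rewrite oppr_eq0 mulf_neq0.
have : [\/ v X = v Y /\ v Y = v Z, v Y = v Z /\ v Z < v X /\ v Z < 0,
           v X = v Z /\ v X < v Y /\ v X < 0 | v X = v Y /\ v X < v Z /\ v X < 0].
  by move: nX nY nZ hmin; move: (v X) (v Y) (v Z) => p q r; apply: cases4.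
case.
- by case=> h1 h2; apply: (S0 hres); rewrite ?vu ?vw -?h2 h1 subrr.
- case=> h1 [h2 h3].
  pose t := iota (A / B) * ((iota c0 - iota c1 * X) / (iota (- (A * c1)) * Z)).
  apply: (S3 hv hres (t := t)) => //; first by rewrite vu vw h1.
    rewrite /t eY !rmorphM !rmorphN !fmorphV /=; field.
    by rewrite Z0 X0 iB oppr_eq0 mulf_neq0.
  rewrite /t; apply: (vge_mulC hv).
  have hs : vge v (v Z + 1) (iota c0 - iota c1 * X).
    apply: (vge_add hv); first exact: vge_le (lt0_add1 h3) (vge_C hv c0).
    apply: (vge_opp hv); apply: (vge_mulC hv); exact: vge_le (lt_add1 h2) (vge_v _ _).
  have m2' : iota (- (A * c1)) * Z != 0 by rewrite mulf_neq0 ?fmorph_eq0.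
  apply: vge_le (vge_div hv m2' hs).
  by rewrite (vmulC hv) // add1_sub.

- case=> h1 [h2 h3].
  pose t := iota B * ((iota c0 - iota (- (A * c1)) * Y) / (iota (- (B * c1)) * X)).
  have ht : vge v 1 t.
    rewrite /t; apply: (vge_mulC hv).
    have hs : vge v (v X + 1) (iota c0 - iota (- (A * c1)) * Y).
      apply: (vge_add hv); first exact: vge_le (lt0_add1 h3) (vge_C hv c0).
      apply: (vge_opp hv); apply: (vge_mulC hv).
      exact: vge_le (lt_add1 h2) (vge_v _ _).
    have m' : iota (- (B * c1)) * X != 0 by rewrite mulf_neq0 ?fmorph_eq0.
    apply: vge_le (vge_div hv m' hs).
    by rewrite (vmulC hv) // add1_sub.
  have ew : iota B * Z / X = 1 + t.
    rewrite /t eZ !(rmorphN, rmorphM) /=; field.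
    by rewrite X0 oppr_eq0 mulf_neq0.
  have [q1 q2 q3] := unit_plus hv hres (or_introl erefl) ht.
  by apply: (S2 hv hres); rewrite ew ?q1 ?q2 ?q3 ?(res1 hres).
- case=> h1 [h2 h3].
  pose t := iota A * ((iota c0 - iota (- (B * c1)) * Z) / (iota (- (A * c1)) * X)).
  have ht : vge v 1 t.
    rewrite /t; apply: (vge_mulC hv).
    have hs : vge v (v X + 1) (iota c0 - iota (- (B * c1)) * Z).
      apply: (vge_add hv); first exact: vge_le (lt0_add1 h3) (vge_C hv c0).
      apply: (vge_opp hv); apply: (vge_mulC hv).
      exact: vge_le (lt_add1 h2) (vge_v _ _).
    have m' : iota (- (A * c1)) * X != 0 by rewrite mulf_neq0 ?fmorph_eq0.
    apply: vge_le (vge_div hv m' hs).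
    by rewrite (vmulC hv) // add1_sub.
  have eu : iota A * Y / X = 1 + t.
    rewrite /t eY !(rmorphN, rmorphM) /=; field.
    by rewrite X0 oppr_eq0 mulf_neq0.
  have [q1 q2 q3] := unit_plus hv hres (or_introl erefl) ht.
  by apply: (S1 hv hres); rewrite eu ?q1 ?q2 ?q3 ?(res1 hres).
Qed.
End R2.

Section S.
Lemma ev2_prod (K : fieldType) (N : nat) (Ns : 'I_N -> nat)
  (a b : 'I_N -> K) (c : forall i : 'I_N, 'I_(Ns i) -> K) (lam : K)
  (F : fieldType) (iota : {rmorphism K -> F}) (x y : F) :
  ev2 iota x y (@fpoly K N Ns a b c lam) =
  iota lam * (\prod_(i < N) \prod_(j < Ns i) Lel iota x y (a i) (b i) (c i j)) - 1.
Proof.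
have cfx : commr_rmorph iota x by move=> z; exact: mulrC.
have cfy : commr_rmorph (horner_morph cfx) y by move=> z; exact: mulrC.
have -> : ev2 iota x y (@fpoly K N Ns a b c lam) = horner_morph cfy (@fpoly K N Ns a b c lam) by [].
rewrite /fpoly rmorphB rmorph1 rmorphM rmorph_prod /polyC2 /= !horner_morphC.
congr (_ * _ - _); first exact: horner_morphC. apply: eq_bigr => i _; rewrite rmorph_prod; apply: eq_bigr => j _.
rewrite /Lpoly /polyC2 /polyX2 /polyY2 !rmorphD !rmorphM /= !horner_morphC !horner_morphX.
rewrite /Lel; congr (_ * _ + _ * _ + _); first [exact: horner_morphC | exact: horner_morphX].
Qed.
End S.

Lemma vprod (K F : fieldType) (iota : {rmorphism K -> F}) (v : F -> int)
  (hv : is_Kdval iota v) (I : finType) (f : I -> F) :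
  (forall i, f i != 0) -> \prod_i f i != 0 /\ v (\prod_i f i) = \sum_i v (f i).
Proof.
move=> nz; apply: (big_rec2 (fun p s => p != 0 /\ v p = s)).
  by rewrite oner_neq0 (v1 hv).
move=> i p s _ [p0 <-]; split; first by rewrite mulf_neq0.
by rewrite (vM hv).
Qed.
Arguments vprod {K F iota v} hv {I} f _.


Unset Implicit Arguments.
Set Strict Implicit.

Theorem lemma2p2 (K : fieldType) (N : nat) (Ns : 'I_N -> nat)
  (a b : 'I_N -> K) (c : forall i : 'I_N, 'I_(Ns i) -> K) (lam : K)
  (hN : (2 <= N)%N)
  (hNs : forall i, (1 <= Ns i)%N)
  (hab : forall i, (a i, b i) != (0, 0))
  (hdistinct : forall (i : 'I_N) (j : 'I_(Ns i)) (i' : 'I_N) (j' : 'I_(Ns i')),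
      (i != i' \/ nat_of_ord j != nat_of_ord j') ->
      ~ (exists mu : K, [/\ mu != 0, a i' = mu * a i, b i' = mu * b i
                          & c i' j' = mu * c i j]))
  (hbrk : forall i k : 'I_N, i != k -> brk a b i k != 0)
  (hlam : lam != 0)
  (F : fieldType) (iota : {rmorphism K -> F}) (x y : F)
  (hF : is_function_field iota x y (@fpoly K N Ns a b c lam)) :
  let L := fun (i : 'I_N) (j : 'I_(Ns i)) => Lel iota x y (a i) (b i) (c i j) in
  (forall (i : 'I_N) (j k : 'I_(Ns i)) (l : 'I_N) (m n : 'I_(Ns l)),
      i != l -> in_K2T iota (L i j / L i k) (L l m / L l n)) /\
  (forall (i : 'I_N) (j : 'I_(Ns i)) (k : 'I_N) (l : 'I_(Ns k))
          (m : 'I_N) (n : 'I_(Ns m)),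
      i != k -> k != m -> i != m ->
      in_K2T iota (iota (brk a b i m / brk a b k m) * L k l / L i j)
                  (iota (brk a b i k / brk a b m k) * L m n / L i j)).
Proof.
move=> L.
have hprod : iota lam * (\prod_(i < N) \prod_(j < Ns i) L i j) = 1.
  have := (proj1 hF (@fpoly K N Ns a b c lam)).2 (ex_intro _ 1 (esym (mulr1 _))).
  by rewrite ev2_prod => /eqP; rewrite subr_eq0 => /eqP.
have Lnz : forall i j, L i j != 0.
  move=> i j; apply/eqP => h; move: hprod.
  rewrite (bigD1 i) //= (bigD1 j) //= h mul0r mul0r mulr0 => /eqP.
  by rewrite eq_sym oner_eq0.
have grp : forall i (j k : 'I_(Ns i)), L i j - L i k = iota (c i j - c i k).
  by move=> i j k; rewrite /L /Lel rmorphB; ring.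
have rel : forall (p q r : 'I_N) (j : 'I_(Ns p)) (l : 'I_(Ns q)) (n : 'I_(Ns r)),
    iota (brk a b r q) * L p j + iota (brk a b p r) * L q l - iota (brk a b p q) * L r n
    = iota (brk a b r q * c p j + brk a b p r * c q l - brk a b p q * c r n).
  by move=> p q r j l n; rewrite /L /Lel /brk !(rmorphB, rmorphD, rmorphM); ring.
have allzero : forall v : F -> int, is_Kdval iota v ->
    forall (i : 'I_N) (j : 'I_(Ns i)) (k : 'I_N) (l : 'I_(Ns k)), i != k ->
    vge v 0 (L i j) -> vge v 0 (L k l) -> forall p q, v (L p q) = 0.
  move=> v hv i j k l ik h1 h2.
  have hall : forall p q, 0 <= v (L p q).
    move=> p q.
    have E : iota (brk a b i k) * L p q = iota (brk a b p k) * L i j + iota (brk a b i p) * L k l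
       - iota (brk a b p k * c i j + brk a b i p * c k l - brk a b i k * c p q).
      by rewrite -rel; ring.
    have E2 : L p q = iota ((brk a b i k)^-1) * (iota (brk a b i k) * L p q).
      by rewrite mulrA -rmorphM mulVf ?hbrk // rmorph1 mul1r.
    have : vge v 0 (L p q).
      rewrite E2 E; apply: (vge_mulC hv); apply: (vge_add hv); last first.
        by apply: (vge_opp hv); apply: (vge_C hv).
      by apply: (vge_add hv); apply: (vge_mulC hv).
    by case=> // h; move: (Lnz p q); rewrite h eqxx.
  have [_ vP] := vprod hv (fun i => \prod_(j < Ns i) L i j) (fun i => (vprod hv _ (Lnz i)).1).
  have vL : v (\prod_(i < N) \prod_(j < Ns i) L i j) = 0.
    have := congr1 v hprod; rewrite (vM hv) ?fmorph_eq0 ?(vC hv) ?add0r ?(v1 hv) //.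
    exact: (vprod hv _ (fun i => (vprod hv _ (Lnz i)).1)).1.
  have hs : \sum_(i < N) \sum_(j < Ns i) v (L i j) = 0.
    rewrite -[RHS]vL vP; apply: eq_bigr => i0 _; exact: (esym (vprod hv _ (Lnz i0)).2).
  move=> p q.
  have h0 : \sum_(j < Ns p) v (L p j) = 0 :=
    psumr_eq0P (fun i _ => sumr_ge0 _ (fun j _ => hall i j)) hs isT.
  have := psumr_eq0P (fun j _ => hall p j) h0. by move=> H; apply: H.
split.
  move=> i j k l m n il v hv kk res hres.
  have [ge|lt] := lerP 0 (v (L i k)).
    have [ge'|lt'] := lerP 0 (v (L l n)).
      have z := allzero v hv i k l n il (or_intror ge) (or_intror ge').
      by apply: (S0 hres); rewrite (vD hv) ?Lnz // !z subrr.
    have [q1 q2 q3] := Rcase hv hres (Lnz l n) lt' (grp l m n).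
    exact: (S2 hv hres _ q1 q2 q3).
  have [q1 q2 q3] := Rcase hv hres (Lnz i k) lt (grp i j k).
  exact: (S1 hv hres _ q1 q2 q3).
move=> i j k l m n ik km im v hv kk res hres.
have bkm := hbrk k m km.
have bmk : brk a b m k != 0 by apply: hbrk; rewrite eq_sym.
have bim := hbrk i m im.
have bik := hbrk i k ik.
have e1 : - (brk a b i m / brk a b k m * brk a b m k) = brk a b i m.
  by move: bkm; rewrite /brk => bkm; field.
have e2 : - (brk a b i k / brk a b m k * brk a b m k) = - brk a b i k.
  by rewrite divfK.
apply: (Tcase hv hres (c0 := brk a b m k * c i j + brk a b i m * c k l - brk a b i k * c m n)).
- exact: Lnz.
- exact: Lnz.
- exact: Lnz.
- exact: bmk.
- by rewrite mulf_neq0 ?invr_neq0.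
- by rewrite mulf_neq0 ?invr_neq0.
- by rewrite e1 e2 -rel rmorphN mulNr.
- move=> h1 h2; have z := allzero v hv i j k l ik h1 h2; by rewrite !z.
Qed.
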